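(* Let $\Gamma$ be a connected finite simple graph. Then $C_3(L(\Gamma))\cong\Gamma$ if and only if all of the following hold: (1) every vertex of $\Gamma$ has degree $2$ or $3$; (2) every vertex of degree $2$ in $\Gamma$ is contained in a triangle; (3) every triangle in $\Gamma$ contains exactly one vertex of degree $2$; (4) distinct triangles in $\Gamma$ share no vertices.
   Context: $L(\Gamma)$ is the line graph of $\Gamma$: its vertices are the edges of $\Gamma$, two being adjacent iff they share an endpoint. For a graph $H$, $C_3(H)$ is the graph whose vertices are the triangles (cliques of order $3$) of $H$, two distinct triangles being adjacent iff they share at least one vertex. *)

(* Defs.v *)
From HB Require Import structures.
From mathcomp Require Import all_boot.
Set Implicit Arguments. Unset Strict Implicit. Unset Printing Implicit Defensive.

Record sgraph := SGraph {
  svert : finType;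
  sadj : rel svert;
  sadj_sym : symmetric sadj;
  sadj_irr : irreflexive sadj }.

Section IGraph.
Variables (T : finType) (P : pred {set T}).
Definition ivert := {A : {set T} | P A}.
Definition iadj : rel ivert := fun A B => (A != B) && (val A :&: val B != set0).
Lemma iadj_sym : symmetric iadj.
Proof. by move=> A B; rewrite /iadj eq_sym setIC. Qed.
Lemma iadj_irr : irreflexive iadj.
Proof. by move=> A; rewrite /iadj eqxx. Qed.
Definition igraph : sgraph := @SGraph ivert iadj iadj_sym iadj_irr.
End IGraph.

Definition is_edge (G : sgraph) (A : {set svert G}) : bool :=
  [exists x : svert G, exists y : svert G, @sadj G x y && (A == [set x; y])].

Definition is_triangle (G : sgraph) (A : {set svert G}) : bool :=
  (#|A| == 3) && [forall x in A, forall y in A, (x != y) ==> @sadj G x y].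

Definition line_graph (G : sgraph) : sgraph := igraph (@is_edge G).

Definition C3 (H : sgraph) : sgraph := igraph (@is_triangle H).

Definition deg (G : sgraph) (x : svert G) : nat := #|[set y | @sadj G x y]|.

Definition connected (G : sgraph) : Prop := forall x y : svert G, connect (@sadj G) x y.

Definition isomorphic (G1 G2 : sgraph) : Prop :=
  exists f : svert G1 -> svert G2, bijective f /\ forall x y, @sadj G2 (f x) (f y) = @sadj G1 x y.

(* Main.v *)
Require Import Defs.
From mathcomp Require Import all_boot.
From mathcomp Require Import zify.
Set Implicit Arguments. Unset Strict Implicit. Unset Printing Implicit Defensive.
Lemma inj_card (T1 T2 : finType) (A : {set T1}) (B : {set T2}) (f : T1 -> T2) :
  {in A &, injective f} -> (forall x, x \in A -> f x \in B) -> #|A| <= #|B|.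
Proof.
move=> fi fAB; rewrite -(card_in_imset fi); apply: subset_leq_card.
by apply/subsetP => y /imsetP [x xA ->]; apply: fAB.
Qed.

Section Main.
Variable G : sgraph.
Local Notation V := (svert G).
Local Notation adj := (@sadj G).
Local Notation EV := (svert (line_graph G)).

Lemma adj_neq x y : adj x y -> x != y.
Proof. by apply: contraTneq => ->; rewrite sadj_irr. Qed.

Lemma edgeP (e : EV) : exists y z, adj y z /\ val e = [set y; z].
Proof.
case: e => A /= /existsP [y /existsP [z /andP [Hyz /eqP ->]]].
by exists y, z.
Qed.

Lemma is_edge_adj y z : adj y z -> is_edge [set y; z].
Proof. by move=> H; apply/existsP; exists y; apply/existsP; exists z; rewrite H eqxx. Qed.

Lemma card_edge (e : EV) : #|val e| = 2.
Proof. by have [y [z [H ->]]] := edgeP e; rewrite cards2 (adj_neq H). Qed.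

Lemma edge_other (e : EV) v : v \in val e ->
  exists w, [/\ w != v, adj v w & val e = [set v; w]].
Proof.
have [y [z [H ->]]] := edgeP e.
rewrite !inE => /orP [] /eqP ->.
  by exists z; rewrite eq_sym (adj_neq H) H.
by exists y; rewrite (adj_neq H) sadj_sym H setUC.
Qed.

Lemma edge_two (e : EV) x y : x != y -> x \in val e -> y \in val e ->
  val e = [set x; y] /\ adj x y.
Proof.
move=> xy xe ye; have [w [wx xw ew]] := edge_other xe.
move: ye; rewrite ew !inE eq_sym (negbTE xy) /= => /eqP yw; subst w.
by [].
Qed.

Definition mkE (e0 : EV) (y z : V) : EV := insubd e0 [set y; z].

Lemma val_mkE e0 y z : adj y z -> val (mkE e0 y z) = [set y; z].
Proof. by move=> H; rewrite /mkE insubdK //; apply: is_edge_adj. Qed.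

Definition nb (x : V) := [set y | adj x y].

Lemma degE x : deg x = #|nb x|.
Proof. by []. Qed.

Definition oth (v : V) (e : EV) : V := odflt v [pick w in val e :\ v].

Lemma othP (e : EV) v : v \in val e ->
  [/\ oth v e != v, adj v (oth v e), val e = [set v; oth v e] & val e :\ v = [set oth v e]].
Proof.
move=> ve; have [w [wv vw ew]] := edge_other ve.
have E1 : val e :\ v = [set w].
  apply/setP => u; rewrite !inE ew !inE.
  case: (eqVneq u v) => [->|uv] /=; first by rewrite eq_sym (negbTE wv).
  by [].
have -> : oth v e = w.
  rewrite /oth; case: pickP => [u|].
    by rewrite E1 inE => /eqP.
  by move/(_ w); rewrite E1 set11.
by [].
Qed.

Lemma card_star_in v (Y : {set V}) : Y \subset nb v ->
  #|[set e : EV | (v \in val e) && (val e :\ v \subset Y)]| = #|Y|.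
Proof.
move=> Ysub; apply/eqP; rewrite eqn_leq; apply/andP; split.
  apply: (@inj_card _ _ _ _ (oth v)).
    move=> e1 e2; rewrite !inE => /andP [v1 _] /andP [v2 _] eq12.
    have [_ _ E1 _] := othP v1; have [_ _ E2 _] := othP v2.
    by apply: val_inj; rewrite E1 E2 eq12.
  move=> e; rewrite inE => /andP [ve sub].
  have [_ _ _ E] := othP ve.
  by move/subsetP: sub; apply; rewrite E set11.
case: (set_0Vmem Y) => [->|[y0 y0Y]]; first by rewrite cards0.
have av0 : adj v y0 by move/subsetP: Ysub => /(_ y0 y0Y); rewrite inE.
pose e0 : EV := Sub [set v; y0] (is_edge_adj av0).
apply: (@inj_card _ _ _ _ (mkE e0 v)).
  move=> y1 y2 y1Y y2Y eq12.
  have a1 : adj v y1 by move/subsetP: Ysub => /(_ y1 y1Y); rewrite inE.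
  have a2 : adj v y2 by move/subsetP: Ysub => /(_ y2 y2Y); rewrite inE.
  have := congr1 val eq12; rewrite !val_mkE // => E.
  have : y1 \in [set v; y2] by rewrite -E !inE eqxx orbT.
  rewrite !inE => /orP [/eqP e1|/eqP //].
  by move: a1; rewrite e1 sadj_irr.
move=> y yY.
have ay : adj v y by move/subsetP: Ysub => /(_ y yY); rewrite inE.
rewrite inE val_mkE // !inE eqxx /=.
apply/subsetP => u; rewrite !inE => /andP [uv /orP [/eqP uv'|/eqP ->//]].
by rewrite uv' eqxx in uv.
Qed.


Definition LT (A : {set EV}) := @is_triangle (line_graph G) A.

Lemma LT_intro (A : {set EV}) : #|A| = 3 ->
  (forall e1 e2, e1 \in A -> e2 \in A -> e1 != e2 -> val e1 :&: val e2 != set0) -> LT A.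
Proof.
move=> cA H; rewrite /LT /is_triangle cA eqxx /=.
apply/forallP => e1; apply/implyP => e1A; apply/forallP => e2; apply/implyP => e2A.
apply/implyP => ne; rewrite /= /iadj ne /=; exact: H.
Qed.

Lemma LT_card (A : {set EV}) : LT A -> #|A| = 3.
Proof. by case/andP => /eqP. Qed.

Lemma LT_meet (A : {set EV}) (e1 e2 : EV) : LT A -> e1 \in A -> e2 \in A -> e1 != e2 -> val e1 :&: val e2 != set0.
Proof.
case/andP => _ /forallP /(_ e1) /implyP H e1A e2A ne.
by move: (H e1A) => /forallP /(_ e2) /implyP /(_ e2A) /implyP /(_ ne) /andP [].
Qed.

Lemma LT_common (A : {set EV}) (v : V) : #|A| = 3 -> (forall e, e \in A -> v \in val e) -> LT A.
Proof.
move=> cA H; apply: LT_intro => // e1 e2 e1A e2A _.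
by apply/set0Pn; exists v; rewrite inE !H.
Qed.

Definition rstar (x : V) := [set e : EV | x \in val e].

Lemma card_rstar x : #|rstar x| = deg x.
Proof.
rewrite degE -(@card_star_in x (nb x)) //; apply: eq_card => e; rewrite !inE.
case ve: (x \in val e) => //=; symmetry.
have [_ a _ ->] := othP ve; by rewrite sub1set inE.
Qed.

Lemma LT_rstar x : deg x = 3 -> LT (rstar x).
Proof. by move=> d3; apply: (@LT_common _ x); rewrite ?card_rstar // => e; rewrite inE. Qed.

Lemma common2_card (A : {set EV}) x y : x != y ->
  (forall e, e \in A -> x \in val e /\ y \in val e) -> #|A| <= 1.
Proof.
move=> xy H; apply/card_le1_eqP => e1 e2 /H [x1 y1] /H [x2 y2].
apply: val_inj; by rewrite (edge_two xy x1 y1).1 (edge_two xy x2 y2).1.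
Qed.

Lemma rstar_inj x y : deg x = 3 -> rstar x = rstar y -> x = y.
Proof.
move=> d3 E; apply/eqP/negPn/negP => xy.
suff : #|rstar x| <= 1 by rewrite card_rstar d3.
apply: (common2_card xy) => e eA; split; first by move: eA; rewrite inE.
by move: eA; rewrite E inE.
Qed.

Lemma triP (T : {set V}) : is_triangle T -> #|T| = 3 /\ forall x y, x \in T -> y \in T -> x != y -> adj x y.
Proof.
case/andP => /eqP c /forallP H; split => // x y xT yT xy.
by move: (H x) => /implyP /(_ xT) /forallP /(_ y) /implyP /(_ yT) /implyP /(_ xy).
Qed.

Lemma tri_intro (T : {set V}) : #|T| = 3 -> (forall x y, x \in T -> y \in T -> x != y -> adj x y) -> is_triangle T.
Proof.
move=> c H; rewrite /is_triangle c eqxx /=.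
apply/forallP => x; apply/implyP => xT; apply/forallP => y; apply/implyP => yT.
apply/implyP; exact: H.
Qed.

Lemma cardD1_in (T' : finType) (A : {set T'}) a n : #|A| = n.+1 -> a \in A -> #|A :\ a| = n.
Proof. by move=> c aA; move: c; rewrite (cardsD1 a A) aA add1n => -[]. Qed.

Lemma setD_D1 (T' : finType) (A : {set T'}) a : a \in A -> A :\: (A :\ a) = [set a].
Proof.
move=> aA; apply/setP => u; rewrite !inE.
by case: (eqVneq u a) => [->|] /=; [rewrite aA | case: (u \in A)].
Qed.

Lemma rtri_edge (T : {set V}) (w : V) : is_triangle T -> w \in T -> is_edge (T :\ w).
Proof.
move=> /triP [c H] wT.
have : #|T :\ w| == 2 by rewrite (cardD1_in c wT).
case/cards2P => y [z [yz E]]; rewrite E; apply: is_edge_adj; apply: H => //.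
  have : y \in T :\ w by rewrite E !inE eqxx.
  by rewrite inE => /andP [].
have : z \in T :\ w by rewrite E !inE eqxx orbT.
by rewrite inE => /andP [].
Qed.

Definition rtri (T : {set V}) := [set e : EV | val e \subset T].

Lemma rtri_elt (T : {set V}) (e : EV) : is_triangle T -> e \in rtri T -> exists2 w, w \in T & val e = T :\ w.
Proof.
move=> /triP [c _]; rewrite inE => sub.
have : #|T :\: val e| == 1.
  by rewrite cardsD (setIidPr sub) c card_edge.
case/cards1P => w E.
have : w \in T :\: val e by rewrite E set11.
rewrite inE => /andP [we wT].
exists w => //; apply/eqP; rewrite eqEcard; apply/andP; split.
  apply/subsetP => z ze; rewrite !inE (subsetP sub z ze) andbT.
  by apply: contraNneq we => <-.
by rewrite card_edge (cardD1_in c wT).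
Qed.

Lemma val_opp (T : {set V}) (w : V) (e0 : EV) : is_triangle T -> w \in T -> val (insubd e0 (T :\ w)) = T :\ w.
Proof. by move=> tT wT; rewrite insubdK //; apply: rtri_edge. Qed.

Lemma card_rtri (T : {set V}) : is_triangle T -> #|rtri T| = 3.
Proof.
move=> tT; have [c H] := triP tT.
have : #|T| > 0 by rewrite c.
case/card_gt0P => w0 w0T.
pose e0 : EV := Sub (T :\ w0) (rtri_edge tT w0T).
apply/eqP; rewrite eqn_leq; apply/andP; split.
  rewrite -c; apply: (@inj_card _ _ _ _ (fun e : EV => odflt w0 [pick w in T :\: val e])).
    move=> e1 e2 /(rtri_elt tT) [w1 w1T E1] /(rtri_elt tT) [w2 w2T E2].
    have P1 : [pick w in T :\: val e1] = Some w1.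
      case: pickP => [u|/(_ w1)]; last by rewrite E1 setD_D1 // inE eqxx.
      by rewrite E1 setD_D1 // inE => /eqP ->.
    have P2 : [pick w in T :\: val e2] = Some w2.
      case: pickP => [u|/(_ w2)]; last by rewrite E2 setD_D1 // inE eqxx.
      by rewrite E2 setD_D1 // inE => /eqP ->.
    rewrite P1 P2 /= => E; apply: val_inj; by rewrite E1 E2 E.
  move=> e /(rtri_elt tT) [w wT E].
  case: pickP => [u|/(_ w)] /=; last by rewrite E setD_D1 // inE eqxx.
  by rewrite inE => /andP [].
rewrite -c; apply: (@inj_card _ _ _ _ (fun w => insubd e0 (T :\ w))).
  move=> w1 w2 w1T w2T /(congr1 val); rewrite !val_opp // => E.
  apply/eqP/negPn/negP => ne.
  have : w2 \in T :\ w1 by rewrite !inE eq_sym ne.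
  by rewrite E !inE eqxx.
by move=> w wT; rewrite inE val_opp // subsetDl.
Qed.

Lemma LT_rtri (T : {set V}) : is_triangle T -> LT (rtri T).
Proof.
move=> tT; apply: LT_intro; first exact: card_rtri.
move=> e1 e2; rewrite !inE => s1 s2 _.
have := cardsUI (val e1) (val e2); rewrite !card_edge.
have : #|val e1 :|: val e2| <= 3 by rewrite -(triP tT).1; apply/subset_leq_card; rewrite subUset s1 s2.
move=> le E; rewrite -card_gt0; lia.
Qed.

Lemma rtri_nocommon (T : {set V}) (v : V) : is_triangle T -> exists2 e, e \in rtri T & v \notin val e.
Proof.
move=> tT; have [c H] := triP tT.
have [w wT vw] : exists2 w, w \in T & v \notin T :\ w.
  case vT: (v \in T); first by exists v; rewrite ?setD11.
  have : #|T| > 0 by rewrite c.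
  case/card_gt0P => w wT; exists w => //.
  by rewrite inE vT andbF.
exists (Sub (T :\ w) (rtri_edge tT wT)); rewrite ?inE ?SubK ?subsetDl //.
by move: vw; rewrite !inE.
Qed.

Lemma common_ne_rtri (A : {set EV}) (v : V) (T : {set V}) : (forall e, e \in A -> v \in val e) -> is_triangle T -> A != rtri T.
Proof.
move=> H tT; apply/eqP => E; have [e eT ve] := rtri_nocommon v tT.
by move: (H e); rewrite E => /(_ eT); rewrite (negbTE ve).
Qed.

Lemma rtri_inj (T1 T2 : {set V}) : is_triangle T1 -> is_triangle T2 -> rtri T1 = rtri T2 -> T1 = T2.
Proof.
move=> t1 t2 E; apply/eqP; rewrite eqEcard (triP t1).1 (triP t2).1 leqnn andbT.
apply/subsetP => v vT.
have : #|T1 :\ v| > 0 by rewrite (cardD1_in (triP t1).1 vT).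
case/card_gt0P => w; rewrite !inE => /andP [wv wT].
have eT : (Sub (T1 :\ w) (rtri_edge t1 wT) : EV) \in rtri T2 by rewrite -E inE SubK subsetDl.
by move: eT; rewrite inE SubK => /subsetP; apply; rewrite !inE eq_sym wv.
Qed.


Lemma card3 (T' : finType) (a b c : T') : a != b -> a != c -> b != c -> #|[set a; b; c]| = 3.
Proof.
move=> ab ac bc.
by rewrite -setUA cardsU1 cards2 !inE (negbTE ab) (negbTE ac) bc.
Qed.

Lemma tri3 p q r : adj p q -> adj q r -> adj p r -> is_triangle [set p; q; r].
Proof.
move=> apq aqr apr; apply: tri_intro.
  by apply: card3; apply: adj_neq.
move=> x y; rewrite !inE -!orbA => /or3P [] /eqP -> /or3P [] /eqP -> //; rewrite ?eqxx // => _;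
  by rewrite // sadj_sym.
Qed.

Lemma meet_edges (e1 e2 : EV) : val e1 :&: val e2 != set0 -> exists2 r, r \in val e1 & r \in val e2.
Proof. by case/set0Pn => r; rewrite inE => /andP [a b]; exists r. Qed.

Lemma classify (A : {set EV}) : (forall x : V, deg x <= 3) -> LT A ->
  (exists2 x : V, deg x = 3 & A = rstar x) \/ (exists2 T, is_triangle T & A = rtri T).
Proof.
move=> D3 lA; have cA := LT_card lA.
have : #|A| > 0 by rewrite cA.
case/card_gt0P => e1 e1A.
have [p [q [apq E1]]] := edgeP e1.
have sub_star (x : V) : (forall e, e \in A -> x \in val e) -> exists2 x : V, deg x = 3 & A = rstar x.
  move=> H; have sA : A \subset rstar x by apply/subsetP => e eA; rewrite inE H.
  have := subset_leq_card sA; rewrite cA card_rstar => d3.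
  have dx : deg x = 3 by apply/eqP; rewrite eqn_leq D3 d3.
  exists x => //; apply/eqP; rewrite eqEcard sA card_rstar dx cA //.
case: (boolP [forall e in A, p \in val e]) => [/forall_inP Hp|Hp].
  by left; apply: (sub_star p) => e /Hp.
case: (boolP [forall e in A, q \in val e]) => [/forall_inP Hq|Hq].
  by left; apply: (sub_star q) => e /Hq.
right.
have [e2 e2A pe2] : exists2 e2, e2 \in A & p \notin val e2.
  apply/exists_inP; apply: contraR Hp => /exists_inPn H; by apply/forall_inP => e /H /negPn.
have [e3 e3A qe3] : exists2 e3, e3 \in A & q \notin val e3.
  apply/exists_inP; apply: contraR Hq => /exists_inPn H; by apply/forall_inP => e /H /negPn.
have pq := adj_neq apq.
have ne12 : e1 != e2 by apply: contraNneq pe2 => <-; rewrite E1 !inE eqxx.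
have ne13 : e1 != e3 by apply: contraNneq qe3 => <-; rewrite E1 !inE eqxx orbT.
have [r1 r1e1 r1e2] := meet_edges (LT_meet lA e1A e2A ne12).
have qe2 : q \in val e2.
  by move: r1e1; rewrite E1 !inE => /orP [] /eqP rr; subst r1; [rewrite r1e2 in pe2|].
have [r2 r2e1 r2e3] := meet_edges (LT_meet lA e1A e3A ne13).
have pe3 : p \in val e3.
  by move: r2e1; rewrite E1 !inE => /orP [] /eqP rr; subst r2; [|rewrite r2e3 in qe3].
have ne23 : e2 != e3 by apply: contraNneq qe3 => <-.
have [r re2 re3] := meet_edges (LT_meet lA e2A e3A ne23).
have rp : r != p by apply: contraNneq pe2 => <-.
have rq : r != q by apply: contraNneq qe3 => <-.
have qr : q != r by rewrite eq_sym.
have pr : p != r by rewrite eq_sym.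
have [E2 aqr] := edge_two qr qe2 re2.
have [E3 apr] := edge_two pr pe3 re3.
have tT := tri3 apq aqr apr.
exists [set p; q; r] => //.
have cB : #|[set e1; e2; e3]| = 3 by apply: card3.
have BA : [set e1; e2; e3] = A.
  apply/eqP; rewrite eqEcard cA cB leqnn andbT.
  by apply/subsetP => e; rewrite !inE -!orbA => /or3P [] /eqP ->.
have BT : [set e1; e2; e3] = rtri [set p; q; r].
  apply/eqP; rewrite eqEcard card_rtri // cB leqnn andbT.
  apply/subsetP => e; rewrite !inE -!orbA => /or3P [] /eqP ->; rewrite ?inE ?E1 ?E2 ?E3;
  apply/subsetP => z; rewrite !inE => /orP [] /eqP ->; rewrite eqxx ?orbT //.
by rewrite -BA BT.
Qed.


Local Notation CV := (svert (C3 (line_graph G))).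

Lemma iadjC (S U : CV) : @sadj (C3 (line_graph G)) S U = (val S != val U) && (val S :&: val U != set0).
Proof. by rewrite /= /iadj (inj_eq val_inj). Qed.

Lemma iso_from (F : V -> CV) : bijective F ->
  (forall x y, @sadj (C3 (line_graph G)) (F x) (F y) = adj x y) -> isomorphic (C3 (line_graph G)) G.
Proof.
case=> g FK gK H; exists g; split; first by exists F.
by move=> S U; rewrite -{2}(gK S) -{2}(gK U) H.
Qed.

Lemma meet_rstar (x y : V) : x != y -> (rstar x :&: rstar y != set0) = adj x y.
Proof.
move=> xy; apply/idP/idP.
  by case/set0Pn => e; rewrite !inE => /andP [xe ye]; exact: (edge_two xy xe ye).2.
move=> H; apply/set0Pn; exists (Sub [set x; y] (is_edge_adj H)).
by rewrite !inE !eqxx orbT.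
Qed.

Lemma other_in (T : {set V}) (x : V) : is_triangle T -> exists2 w, w \in T & w != x.
Proof.
move=> tT; have [c _] := triP tT.
have : #|T :\ x| > 0.
  by move: c; rewrite (cardsD1 x T); case: (x \in T) => /= c; lia.
by case/card_gt0P => w; rewrite !inE => /andP [wx wT]; exists w.
Qed.

Lemma meet_rstar_rtri (x : V) (T : {set V}) : is_triangle T -> (rstar x :&: rtri T != set0) = (x \in T).
Proof.
move=> tT; apply/idP/idP.
  case/set0Pn => e; rewrite !inE => /andP [xe /subsetP]; exact.
move=> xT; have [w wT wx] := other_in x tT.
apply/set0Pn; exists (Sub (T :\ w) (rtri_edge tT wT)).
rewrite !inE eq_sym wx xT /=; exact: subsetDl.
Qed.

Lemma meet_rtri (T1 T2 : {set V}) : rtri T1 :&: rtri T2 != set0 -> T1 :&: T2 != set0.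
Proof.
case/set0Pn => e; rewrite !inE => /andP [s1 s2].
have : #|val e| > 0 by rewrite card_edge.
case/card_gt0P => z ze; apply/set0Pn; exists z.
by rewrite inE (subsetP s1 z ze) (subsetP s2 z ze).
Qed.

Section IfDir.
Hypothesis H1 : forall x : V, deg x = 2 \/ deg x = 3.
Hypothesis H2 : forall x : V, deg x = 2 -> exists t : {set V}, is_triangle t /\ x \in t.
Hypothesis H3 : forall t : {set V}, is_triangle t -> #|[set x in t | deg x == 2]| = 1.
Hypothesis H4 : forall t1 t2 : {set V}, is_triangle t1 -> is_triangle t2 -> t1 != t2 -> t1 :&: t2 = set0.

Definition tri_of (x : V) := odflt set0 [pick T | is_triangle T && (x \in T)].

Lemma tri_ofP (x : V) : deg x = 2 -> is_triangle (tri_of x) /\ x \in tri_of x.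
Proof.
move=> /H2 [t [tt xt]]; rewrite /tri_of; case: pickP => [T /andP [] //|/(_ t)].
by rewrite tt xt.
Qed.

Lemma tri_of_uniq (x : V) (T : {set V}) : is_triangle T -> x \in T -> deg x = 2 -> tri_of x = T.
Proof.
move=> tT xT d2; have [t1 x1] := tri_ofP d2.
apply/eqP; apply/negPn/negP => ne.
have := H4 t1 tT ne; move/setP => /(_ x); by rewrite !inE x1 xT.
Qed.

Lemma deg2_uniq (T : {set V}) (y z : V) : is_triangle T -> y \in T -> z \in T -> deg y = 2 -> deg z = 2 -> y = z.
Proof.
move=> tT yT zT dy dz; have := H3 tT => /eqP /cards1P [w E].
have : y \in [set x in T | deg x == 2] by rewrite inE yT dy.
have : z \in [set x in T | deg x == 2] by rewrite inE zT dz.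
by rewrite E !inE => /eqP -> /eqP ->.
Qed.

Lemma deg_le3 (x : V) : deg x <= 3.
Proof. by case: (H1 x) => ->. Qed.

Lemma nb_deg2 (y : V) : deg y = 2 -> nb y = tri_of y :\ y.
Proof.
move=> d2; have [tT yT] := tri_ofP d2; have [c A] := triP tT.
apply/eqP; rewrite eq_sym eqEcard -degE d2 (cardD1_in c yT) leqnn andbT.
apply/subsetP => z; rewrite !inE => /andP [zy zT]; apply: A => //; by rewrite eq_sym.
Qed.

Definition hh (x : V) : {set EV} := if deg x == 3 then rstar x else rtri (tri_of x).

Lemma hhLT (x : V) : LT (hh x).
Proof.
rewrite /hh; case: ifP => [/eqP|d3]; first exact: LT_rstar.
apply: LT_rtri; case: (H1 x) => d; first by case: (tri_ofP d).
by rewrite d in d3.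
Qed.

Definition FF (x : V) : CV := Sub (hh x) (hhLT x).

Lemma hh_inj : injective hh.
Proof.
move=> x y; rewrite /hh.
case: (H1 x) => dx; case: (H1 y) => dy; rewrite dx dy /=.
- have [tx xt] := tri_ofP dx; have [ty yt] := tri_ofP dy.
  move/(rtri_inj tx ty) => E; apply: (deg2_uniq tx) => //; by rewrite E.
- have [tx xt] := tri_ofP dx; move=> E.
  suff : rstar y != rtri (tri_of x) by rewrite E eqxx.
  by apply: (common_ne_rtri (v:=y)) => // e; rewrite inE.
- have [ty yt] := tri_ofP dy; move=> E.
  suff : rstar x != rtri (tri_of y) by rewrite E eqxx.
  by apply: (common_ne_rtri (v:=x)) => // e; rewrite inE.
- exact: rstar_inj.
Qed.

Lemma FF_adj x y : @sadj (C3 (line_graph G)) (FF x) (FF y) = adj x y.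
Proof.
rewrite iadjC /FF !SubK (inj_eq hh_inj).
case: (eqVneq x y) => [<-|xy] /=; first by rewrite sadj_irr.
rewrite /hh.
case: (H1 x) => dx; case: (H1 y) => dy; rewrite dx dy /=.
- have [tx xt] := tri_ofP dx; have [ty yt] := tri_ofP dy.
  apply/idP/idP.
    move/meet_rtri; apply: contraTT => _; rewrite negbK; apply/eqP.
    case: (eqVneq (tri_of x) (tri_of y)) => [E|ne]; last exact: H4.
    by move: xy; rewrite (deg2_uniq tx xt _ dx dy) ?eqxx // E.
  move=> axy; have : y \in nb x by rewrite inE.
  rewrite nb_deg2 // !inE => /andP [_ ytx].
  by move: xy; rewrite (deg2_uniq tx xt ytx dx dy) eqxx.
- have [tx xt] := tri_ofP dx.
  rewrite setIC meet_rstar_rtri //.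
  apply/idP/idP => [ytx|axy].
    suff : y \in nb x by rewrite inE.
    by rewrite nb_deg2 // !inE ytx eq_sym xy.
  have : y \in nb x by rewrite inE.
  by rewrite nb_deg2 // !inE => /andP [].
- have [ty yt] := tri_ofP dy.
  rewrite meet_rstar_rtri // sadj_sym.
  apply/idP/idP => [xty|ayx].
    suff : x \in nb y by rewrite inE.
    by rewrite nb_deg2 // !inE xty xy.
  have : x \in nb y by rewrite inE.
  by rewrite nb_deg2 // !inE => /andP [].
- exact: meet_rstar.
Qed.

Lemma FF_surj (S : CV) : exists x, FF x = S.
Proof.
have := classify deg_le3 (valP S).
case=> [[x d3 E]|[T tT E]].
  by exists x; apply: val_inj; rewrite SubK /hh d3 eqxx E.
have := H3 tT => /eqP /cards1P [y E1].
have : y \in [set x in T | deg x == 2] by rewrite E1 set11.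
rewrite inE => /andP [yT /eqP dy].
exists y; apply: val_inj; rewrite SubK /hh dy /= (tri_of_uniq tT yT dy) E //.
Qed.

Lemma FF_bij : bijective FF.
Proof.
have inj : injective FF by move=> x y /(congr1 val); rewrite !SubK; apply: hh_inj.
have sj S : exists x, FF x == S by have [x <-] := FF_surj S; exists x.
exists (fun S => xchoose (sj S)) => [x|S]; last by apply/eqP; exact: (xchooseP (sj S)).
by apply: inj; apply/eqP; exact: (xchooseP (sj (FF x))).
Qed.

End IfDir.
End Main.
Lemma exists_subk (T' : finType) (A : {set T'}) k : k <= #|A| -> exists2 B : {set T'}, B \subset A & #|B| = k.
Proof.
elim: k => [|k IH] le; first by exists set0; rewrite ?sub0set ?cards0.
have [B BA cB] := IH (ltnW le).
have : #|A :\: B| > 0 by rewrite cardsD (setIidPr BA) cB; lia.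
case/card_gt0P => a; rewrite inE => /andP [aB aA].
exists (a |: B); first by rewrite subUset sub1set aA BA.
by rewrite cardsU1 aB cB.
Qed.

Lemma meet_of_card (T' : finType) (A B U : {set T'}) :
  A \subset U -> B \subset U -> #|U| < #|A| + #|B| -> A :&: B != set0.
Proof.
move=> AU BU lt; rewrite -card_gt0.
have := cardsUI A B; have : #|A :|: B| <= #|U| by apply: subset_leq_card; rewrite subUset AU BU.
lia.
Qed.

Lemma exch_D (T' : finType) (S : {set T'}) g y : g \notin S -> y \in S ->
  (g |: (S :\ y)) :\: S = [set g] /\ S :\: (g |: (S :\ y)) = [set y].
Proof.
move=> gS yS; have gy : g != y by apply: contraNneq gS => ->.
split; apply/setP => z; rewrite !inE.
  case: (eqVneq z g) => [->|zg]; first by rewrite gS.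
  by case: (z \in S); rewrite ?andbF.
case: (eqVneq z y) => [->|zy]; first by rewrite eq_sym (negbTE gy) yS.
case: (eqVneq z g) => [->|zg]; first by rewrite (negbTE gS).
by case: (z \in S).
Qed.

Lemma sum_sub (I : finType) (A B : {set I}) (F : I -> nat) :
  A \subset B -> \sum_(i in A) F i <= \sum_(i in B) F i.
Proof.
move=> AB; rewrite [X in _ <= X](big_setID A) /=.
by rewrite (setIidPr AB) leq_addr.
Qed.

Lemma sum_split (I : finType) (A : {set I}) (F : I -> nat) :
  \sum_(i : I) F i = \sum_(i in A) F i + \sum_(i in ~: A) F i.
Proof.
rewrite (bigID (fun i => i \in A)) /=; congr (_ + _); apply: eq_bigl => i; by rewrite inE.
Qed.

Lemma sum_eq_max (I : finType) (A : {set I}) (g : I -> nat) c :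
  (forall y, y \in A -> g y <= c) -> #|A| * c <= \sum_(y in A) g y ->
  forall y, y \in A -> g y = c.
Proof.
move=> le ge y yA.
have E : \sum_(i in A) g i + \sum_(i in A) (c - g i) = #|A| * c.
  by rewrite -big_split /= -sum_nat_const; apply: eq_bigr => i iA; rewrite subnKC ?le.
have : \sum_(i in A) (c - g i) == 0 by apply/eqP; lia.
rewrite sum_nat_eq0 => /forall_inP /(_ y yA) /eqP.
have := le y yA; lia.
Qed.

Lemma card_disj (T1 T2 T3 : finType) (f1 : T1 -> T3) (f2 : T2 -> T3) (A1 : {set T1})
  (A2 : {set T2}) (B : {set T3}) :
  {in A1 &, injective f1} -> {in A2 &, injective f2} ->
  (forall a1 a2, a1 \in A1 -> a2 \in A2 -> f1 a1 != f2 a2) ->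
  (forall a, a \in A1 -> f1 a \in B) -> (forall a, a \in A2 -> f2 a \in B) ->
  #|A1| + #|A2| <= #|B|.
Proof.
move=> i1 i2 d b1 b2.
have dj : f1 @: A1 :&: f2 @: A2 = set0.
  apply/setP => z; rewrite !inE; apply/negP => /andP [/imsetP [a1 a1A ->] /imsetP [a2 a2A e]].
  by move: (d a1 a2 a1A a2A); rewrite e eqxx.
rewrite -(card_in_imset i1) -(card_in_imset i2).
have := cardsUI (f1 @: A1) (f2 @: A2); rewrite dj cards0 addn0 => <-.
apply: subset_leq_card; rewrite subUset; apply/andP; split; apply/subsetP => z /imsetP [a aA ->];
  [exact: b1 | exact: b2].
Qed.

Lemma card_as_sum (J : finType) (B : {set J}) (q : pred J) :
  #|[set j in B | q j]| = \sum_(j in B) (q j : nat).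
Proof.
rewrite -sum1_card (eq_bigl (fun j => (j \in B) && q j)); last by move=> j; rewrite inE.
by rewrite big_mkcondr /=; apply: eq_bigr => j _; case: (q j).
Qed.

Lemma sum_card_exch (I J : finType) (A : {set I}) (B : {set J}) (r : I -> J -> bool) :
  \sum_(i in A) #|[set j in B | r i j]| = \sum_(j in B) #|[set i in A | r i j]|.
Proof.
under eq_bigr do rewrite card_as_sum.
rewrite exchange_big /=; apply: eq_bigr => j _; by rewrite card_as_sum.
Qed.

Section OnlyIf.
Variable G : sgraph.
Local Notation V := (svert G).
Local Notation adj := (@sadj G).
Local Notation EV := (svert (line_graph G)).
Local Notation CV := (svert (C3 (line_graph G))).
Variable f : CV -> V.
Hypothesis fb : bijective f.
Hypothesis fa : forall S U, adj (f S) (f U) = @sadj (C3 (line_graph G)) S U.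

Definition nbL (A : {set EV}) := [set B : {set EV} | LT B && (A != B) && (A :&: B != set0)].

Lemma card_CV_pred (P : pred {set EV}) : #|[set U : CV | P (val U)]| = #|[set B | LT B && P B]|.
Proof.
rewrite -(card_imset _ val_inj); apply: eq_card => B; rewrite inE.
apply/imsetP/andP => [[U] |[lB PB]].
  by rewrite inE => PU ->; split => //; apply: valP.
by exists (Sub B lB); rewrite ?inE SubK.
Qed.

Lemma degCV (S : CV) : deg S = #|nbL (val S)|.
Proof.
pose P := fun B : {set EV} => (val S != B) && (val S :&: B != set0).
rewrite /deg.
have -> : [set U | @sadj (C3 (line_graph G)) S U] = [set U : CV | P (val U)].
  by apply/setP => U; rewrite !inE iadjC.
by rewrite (card_CV_pred P); apply: eq_card => B; rewrite !inE andbA.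
Qed.

Lemma f_inj : injective f. Proof. exact: bij_inj. Qed.

Lemma deg_f (S : CV) : deg (f S) = deg S.
Proof.
rewrite /deg -(card_imset _ f_inj); apply: eq_card => y; rewrite inE.
case: fb => g fK gK.
apply/idP/imsetP => [a|[U]].
  have H : @sadj (C3 (line_graph G)) S (g y) by rewrite -fa gK.
  by exists (g y); rewrite ?inE ?gK.
rewrite inE => H ->; by rewrite fa.
Qed.


Lemma sub_rstar_LT (m : V) (S : {set EV}) : S \subset rstar m -> #|S| = 3 -> LT S.
Proof. by move=> sS cS; apply: (LT_common (v:=m)) => // e /(subsetP sS); rewrite inE. Qed.

Lemma big_star (m : V) (S : {set EV}) : S \subset rstar m -> #|S| = 3 -> 3 * (deg m - 3) <= #|nbL S|.
Proof.
move=> sS cS.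
pose R := rstar m.
pose phi := fun p : EV * EV => p.1 |: (S :\ p.2).
have cD : #|setX (R :\: S) S| = (deg m - 3) * 3.
  by rewrite cardsX cardsD (setIidPr sS) card_rstar cS.
rewrite mulnC -cD.
apply: (@inj_card _ _ _ _ phi).
  move=> [g1 y1] [g2 y2]; rewrite !inE /= => /andP [/andP [g1S _] y1S] /andP [/andP [g2S _] y2S] E.
  have [A1 B1] := exch_D g1S y1S; have [A2 B2] := exch_D g2S y2S.
  rewrite /phi /= in E.
  have eg : [set g1] = [set g2] by rewrite -A1 -A2 E.
  have ey : [set y1] = [set y2] by rewrite -B1 -B2 E.
  by rewrite (set1_inj eg) (set1_inj ey).
move=> [g y]; rewrite !inE /= => /andP [/andP [gS gR] yS].
rewrite /phi /=.
have c2 : #|S :\ y| = 2 by apply: cardD1_in.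
have gSy : g \notin S :\ y by rewrite inE (negbTE gS) andbF.
have cP : #|g |: (S :\ y)| = 3 by rewrite cardsU1 gSy c2.
rewrite (sub_rstar_LT (m:=m)) //=; last first.
  by rewrite subUset sub1set (subset_trans (subsetDl _ _) sS) andbT inE; exact: gR.
apply/andP; split.
  by apply: contraNneq gS => ->; rewrite setU11.
have : #|S :\ y| > 0 by rewrite c2.
case/card_gt0P => z zS; apply/set0Pn; exists z.
by rewrite inE setU1r // andbT; move: zS; rewrite inE => /andP [].
Qed.

Definition mkEdge (y z : V) (H : adj y z) : EV := Sub [set y; z] (is_edge_adj H).
Lemma val_mkEdge y z (H : adj y z) : val (mkEdge H) = [set y; z].
Proof. by []. Qed.

Lemma setD1_inj (T' : finType) (K : {set T'}) u1 u2 : u1 \in K -> K :\ u1 = K :\ u2 -> u1 = u2.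
Proof.
move=> u1K E; apply/eqP/negPn/negP => ne.
have : u1 \in K :\ u2 by rewrite !inE ne u1K.
by rewrite -E !inE eqxx.
Qed.

Lemma K4_big (K : {set V}) : #|K| = 4 ->
  (forall a b, a \in K -> b \in K -> a != b -> adj a b) -> exists2 A, LT A & 6 <= #|nbL A|.
Proof.
move=> cK cl.
have clique_tri u : u \in K -> is_triangle (K :\ u).
  move=> uK; apply: tri_intro; first exact: cardD1_in.
  move=> a b; rewrite !inE => /andP [_ aK] /andP [_ bK]; exact: cl.
pose EatK v := [set e : EV | (v \in val e) && (val e :\ v \subset K :\ v)].
have cEat v : v \in K -> #|EatK v| = 3.
  move=> vK; rewrite card_star_in ?(cardD1_in cK) //.
  apply/subsetP => z; rewrite !inE => /andP [zv zK]; apply: cl => //; by rewrite eq_sym.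
have LEat v : v \in K -> LT (EatK v).
  by move=> vK; apply: (LT_common (v:=v)); rewrite ?cEat // => e; rewrite inE => /andP [].
have Eat_ne v T : v \in K -> is_triangle T -> rtri T != EatK v.
  by move=> vK tT; rewrite eq_sym; apply: (common_ne_rtri (v:=v)) => // e; rewrite inE => /andP [].
have : #|K| > 0 by rewrite cK.
case/card_gt0P => w wK.
pose T := K :\ w.
have tT : is_triangle T := clique_tri w wK.
exists (rtri T); first exact: LT_rtri.
pose phi := fun p : V * bool => if p.2 then rtri (K :\ p.1) else EatK p.1.
have c6 : #|setX T [set: bool]| = 6 by rewrite cardsX cardsT card_bool (triP tT).1.
rewrite -c6; apply: (@inj_card _ _ _ _ phi).
  move=> [u1 b1] [u2 b2]; rewrite !inE /= => /andP [/andP [u1w u1K] _] /andP [/andP [u2w u2K] _].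
  rewrite /phi /=.
  case: b1; case: b2 => E.
  - by rewrite (setD1_inj u1K (rtri_inj (clique_tri _ u1K) (clique_tri _ u2K) E)).
  - by move: (Eat_ne u2 _ u2K (clique_tri _ u1K)); rewrite E eqxx.
  - by move: (Eat_ne u1 _ u1K (clique_tri _ u2K)); rewrite E eqxx.
  - suff -> : u1 = u2 by [].
    apply/eqP/negPn/negP => ne.
    suff : #|EatK u1| <= 1 by rewrite cEat.
    apply: (common2_card ne) => e eE; split; first by move: eE; rewrite inE => /andP [].
    by move: eE; rewrite E inE => /andP [].
move=> [u b]; rewrite !inE /= => /andP [/andP [uw uK] _].
rewrite /phi /=; case: b.
- rewrite LT_rtri ?clique_tri //=; apply/andP; split.
    apply: contra_neq uw => E; symmetry; apply: (setD1_inj wK).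
    exact: rtri_inj tT (clique_tri _ uK) E.
  have : #|K :\ w :\ u| == 2.
    by rewrite (cardD1_in (cardD1_in cK wK)) // !inE uw uK.
  case/cards2P => y [z [yz E]].
  have yin : y \in K :\ w :\ u by rewrite E !inE eqxx.
  have zin : z \in K :\ w :\ u by rewrite E !inE eqxx orbT.
  move: yin zin; rewrite !inE => /and3P [yu yw yK] /and3P [zu zw zK].
  have ayz : adj y z by apply: cl.
  apply/set0Pn; exists (mkEdge ayz); rewrite !inE val_mkEdge.
  apply/andP; split; apply/subsetP => v; rewrite !inE => /orP [] /eqP ->; by rewrite ?yu ?yw ?yK ?zu ?zw ?zK.
- rewrite LEat //=; apply/andP; split; first exact: Eat_ne.
  have [z zT zu] := other_in u tT.
  move: (zT); rewrite !inE => /andP [zw zK].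
  have auz : adj u z by apply: cl => //; rewrite eq_sym.
  apply/set0Pn; exists (mkEdge auz); rewrite !inE val_mkEdge eqxx /=.
  apply/andP; split; apply/subsetP => v; rewrite !inE.
    by case/orP => /eqP ->; rewrite ?uw ?uK ?zw ?zK.
  by case/andP => vu /orP [] /eqP vv; subst v; rewrite ?eqxx in vu; rewrite ?zu ?zK.
Qed.

Lemma deg4_K4 (m : V) : deg m = 4 ->
  exists2 K : {set V}, #|K| = 4 & (forall a b, a \in K -> b \in K -> a != b -> adj a b).
Proof.
move=> d4; pose R := rstar m.
have cR : #|R| = 4 by rewrite card_rstar.
have LR e : e \in R -> LT (R :\ e).
  move=> eR; apply: (sub_rstar_LT (m:=m)); [exact: subsetDl | exact: cardD1_in].
have : #|R| > 0 by rewrite cR.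
case/card_gt0P => e0 e0R.
pose c0 : CV := Sub (R :\ e0) (LR e0 e0R).
pose psi := fun e : EV => insubd c0 (R :\ e).
have vpsi e : e \in R -> val (psi e) = R :\ e by move=> eR; rewrite /psi insubdK //; exact: (LR e eR).
have pinj : {in R &, injective (fun e => f (psi e))}.
  move=> e1 e2 e1R e2R /f_inj /(congr1 val); rewrite !vpsi //; exact: setD1_inj.
exists [set f (psi e) | e in R]; first by rewrite card_in_imset.
move=> a b /imsetP [e1 e1R ->] /imsetP [e2 e2R ->] ne.
rewrite fa iadjC !vpsi //.
apply/andP; split.
  by apply: contra_neq ne => /setD1_inj -> //.
apply: (meet_of_card (U:=R)); rewrite ?subsetDl // !(cardD1_in cR) ?cR //.
Qed.

Lemma stepA (x : V) : deg x <= 3.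
Proof.
rewrite leqNgt; apply/negP => gt.
case: (@arg_maxnP _ x xpredT (fun y => deg y) isT) => m _ Hm.
have Dm : 3 < deg m := leq_trans gt (Hm x isT).
have bound A : LT A -> #|nbL A| <= deg m.
  move=> lA; have := degCV (Sub A lA); rewrite SubK => <-; rewrite -deg_f; exact: Hm.
case: (ltngtP (deg m) 4) => [lt4|gt4|e4].
- lia.
- have : 3 <= #|rstar m| by rewrite card_rstar; lia.
  case/exists_subk => S sS cS.
  have := big_star sS cS; have := bound S (sub_rstar_LT sS cS); lia.
- have [K cK cl] := deg4_K4 e4; have [A lA bA] := K4_big cK cl.
  have := bound A lA; lia.
Qed.

Definition V3 := [set x : V | deg x == 3].
Definition Tri := [set T : {set V} | is_triangle T].
Definition tx (x : V) := #|[set T in Tri | x \in T]|.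
Definition ax (x : V) := #|[set y in V3 | adj x y]|.
Definition sT (T : {set V}) := #|[set T' in Tri | (T' != T) && (rtri T :&: rtri T' != set0)]|.

Lemma LB1 (x : V) : x \in V3 -> ax x + tx x <= #|nbL (rstar x)|.
Proof.
rewrite inE => /eqP d3; rewrite /ax /tx.
have := @card_disj _ _ _ (@rstar G) (@rtri G) [set y in V3 | adj x y] [set T in Tri | x \in T] (nbL (rstar x)).
apply.
- move=> y1 y2; rewrite !inE => /andP [/eqP d1 _] _; exact: rstar_inj.
- move=> T1 T2; rewrite !inE => /andP [t1 _] /andP [t2 _]; exact: rtri_inj.
- move=> y T _; rewrite !inE => /andP [tT _].
  by apply: (common_ne_rtri (v:=y)) => // e; rewrite inE.
- move=> y; rewrite !inE => /andP [/eqP dy axy].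
  rewrite LT_rstar //= meet_rstar ?(adj_neq axy) // axy andbT.
  by apply: contra_neq (adj_neq axy) => /rstar_inj ->.
- move=> T; rewrite !inE => /andP [tT xT].
  rewrite LT_rtri //= meet_rstar_rtri // xT andbT.
  by apply: (common_ne_rtri (v:=x)) => // e; rewrite inE.
Qed.

Lemma LB2 (T : {set V}) : T \in Tri -> #|T :&: V3| + sT T <= #|nbL (rtri T)|.
Proof.
rewrite inE => tT; rewrite /sT.
have := @card_disj _ _ _ (@rstar G) (@rtri G) (T :&: V3) [set T' in Tri | (T' != T) && (rtri T :&: rtri T' != set0)] (nbL (rtri T)).
apply.
- move=> y1 y2; rewrite !inE => /andP [_ /eqP d1] _; exact: rstar_inj.
- move=> T1 T2; rewrite !inE => /andP [t1 _] /andP [t2 _]; exact: rtri_inj.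
- move=> y T' _; rewrite !inE => /andP [tT' _].
  by apply: (common_ne_rtri (v:=y)) => // e; rewrite inE.
- move=> y; rewrite !inE => /andP [yT /eqP dy].
  rewrite LT_rstar //= setIC meet_rstar_rtri // yT andbT eq_sym.
  by apply: (common_ne_rtri (v:=y)) => // e; rewrite inE.
- move=> T'; rewrite !inE => /and3P [tT' ne meet].
  rewrite LT_rtri //= meet andbT.
  by apply: contra_neq ne => /(rtri_inj tT tT') ->.
Qed.

Lemma card_bound : #|V| <= #|V3| + #|Tri|.
Proof.
rewrite -(bij_eq_card fb).
have -> : #|CV| = #|[set B : {set EV} | LT B]|.
  have := card_CV_pred predT; rewrite cardsT => ->; apply: eq_card => B; by rewrite !inE andbT.
apply: (@leq_trans #|(@rstar G) @: V3 :|: (@rtri G) @: Tri|).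
  apply: subset_leq_card; apply/subsetP => B; rewrite inE => lB.
  case: (classify stepA lB) => [[x d3 ->]|[T tT ->]]; rewrite inE.
    by apply/orP; left; apply/imsetP; exists x; rewrite ?inE ?d3.
  by apply/orP; right; apply/imsetP; exists T; rewrite ?inE.
have := cardsUI ((@rstar G) @: V3) ((@rtri G) @: Tri).
have := leq_imset_card (@rstar G) V3; have := leq_imset_card (@rtri G) Tri; lia.
Qed.

Lemma deg_sum_ge :
  \sum_(x in V3) (ax x + tx x) + \sum_(T in Tri) (#|T :&: V3| + sT T) <= \sum_(x : V) deg x.
Proof.
pose X := (@rstar G) @: V3; pose Y := (@rtri G) @: Tri.
have E1 : \sum_(x : V) deg x = \sum_(A in [set val S | S in [set: CV]]) #|nbL A|.
  rewrite (reindex f); last exact: onW_bij.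
  rewrite big_imset /=; last by move=> ? ? _ _; apply: val_inj.
  by apply: eq_big => [S|S _]; rewrite ?inE // deg_f degCV.
have sub : X :|: Y \subset [set val S | S in [set: CV]].
  apply/subsetP => B HB.
  have lB : LT B.
    move: HB; rewrite inE => /orP [] /imsetP [z]; rewrite inE => Hz ->.
      by apply: LT_rstar; apply/eqP.
    exact: LT_rtri.
  by apply/imsetP; exists (Sub B lB); rewrite ?inE ?SubK.
have dj : (X :|: Y) :\: X = Y.
  apply/setP => B; rewrite in_setD in_setU.
  case BY : (B \in Y); case BX : (B \in X) => //=.
  move: BX => /imsetP [x]; rewrite inE => /eqP d3 E.
  move: BY => /imsetP [T]; rewrite inE => tT E'.
  have := @common_ne_rtri G (rstar x) x T; rewrite -E' E eqxx; apply => // e; by rewrite inE.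
have eX : \sum_(A in X) #|nbL A| = \sum_(x in V3) #|nbL (rstar x)|.
  by rewrite big_imset // => x y; rewrite !inE => /eqP d3 _; apply: rstar_inj.
have eY : \sum_(A in Y) #|nbL A| = \sum_(T in Tri) #|nbL (rtri T)|.
  by rewrite big_imset // => T1 T2; rewrite !inE => t1 t2; apply: rtri_inj.
rewrite E1; apply: (leq_trans _ (sum_sub _ sub)).
rewrite (big_setID X) /= (setIidPr (subsetUl X Y)) dj eX eY.
by apply: leq_add; apply: leq_sum => ? H; [apply: LB1 | apply: LB2].
Qed.

Lemma arith (n3 nL nV nt a3 t3 X s D T1 T2 T3 tL A dV3 aL dL gL : nat) :
  n3 + nL = nV -> nV <= n3 + nt -> a3 + t3 + (X + s) <= D -> X = t3 ->
  T1 = T2 -> T1 = nt * 3 -> T2 = T3 -> T3 = t3 + tL ->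
  A = dV3 -> dV3 = n3 * 3 -> A = a3 + aL -> D = dV3 + dL ->
  gL = dL + aL + tL + tL -> gL <= nL * 6 ->
  nL * 6 <= gL /\ s = 0 /\ nt <= nL.
Proof. lia. Qed.

Lemma DC1 (P : {set V}) : \sum_(T in Tri) #|T :&: P| = \sum_(x in P) tx x.
Proof.
rewrite /tx -(sum_card_exch Tri P (fun T x => x \in T)).
apply: eq_bigr => T _; apply: eq_card => x; by rewrite !inE andbC.
Qed.

Lemma DC2 : \sum_(y : V) ax y = \sum_(x in V3) deg x.
Proof.
rewrite /ax (eq_bigl (fun y => y \in [set: V])); last by move=> y; rewrite inE.
rewrite (sum_card_exch [set: V] V3 (fun y x => adj y x)).
apply: eq_bigr => x _; rewrite /deg; apply: eq_card => y; by rewrite !inE sadj_sym.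
Qed.

Lemma tx_le1 (y : V) : deg y <= 2 -> tx y <= 1.
Proof.
move=> d2.
have claim T : is_triangle T -> y \in T -> T = y |: nb y.
  move=> tT yT; have [c H] := triP tT.
  have E : T :\ y = nb y.
    apply/eqP; rewrite eqEcard (cardD1_in c yT) -degE d2 andbT.
    apply/subsetP => z; rewrite !inE => /andP [zy zT]; apply: H => //; by rewrite eq_sym.
  by rewrite -E setD1K.
apply/card_le1_eqP => T1 T2; rewrite !inE => /andP [t1 y1] /andP [t2 y2].
by rewrite (claim _ t1 y1) (claim _ t2 y2).
Qed.

Lemma ax_le (y : V) : ax y <= deg y.
Proof.
rewrite /ax degE; apply: subset_leq_card; apply/subsetP => z; rewrite !inE => /andP [].
by [].
Qed.

Lemma only_if_conds :
   [/\ (forall x : V, deg x = 2 \/ deg x = 3),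
       (forall x : V, deg x = 2 -> exists t : {set V}, is_triangle t /\ x \in t),
       (forall t : {set V}, is_triangle t -> #|[set x in t | deg x == 2]| = 1) &
       (forall t1 t2 : {set V}, is_triangle t1 -> is_triangle t2 -> t1 != t2 ->
          t1 :&: t2 = set0)].
Proof.
pose L := ~: V3.
pose g := fun y => deg y + ax y + tx y + tx y.
have gle (y : V) : y \in L -> g y <= 6.
  rewrite !inE => n3; have := stepA y; have := ax_le y.
  have d2 : deg y <= 2 by have := stepA y; move: n3; case: (deg y) => [|[|[|[|]]]].
  have := tx_le1 d2; rewrite /g; lia.
have h1 := cardsC V3.
have h2 := card_bound.
have h3 := deg_sum_ge; rewrite !big_split /= in h3.
have h4 := DC1 V3.
have h5 := DC1 [set: V].
have e5 : \sum_(T in Tri) #|T :&: [set: V]| = #|Tri| * 3.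
  rewrite -sum_nat_const; apply: eq_bigr => T; rewrite inE setIT => tT; exact: (triP tT).1.
have e5' : \sum_(x in [set: V]) tx x = \sum_(x : V) tx x by apply: eq_bigl => x; rewrite inE.
have s5 := sum_split V3 tx.
have h6 := DC2.
have e6 : \sum_(x in V3) deg x = #|V3| * 3.
  by rewrite -sum_nat_const; apply: eq_bigr => x; rewrite inE => /eqP.
have s6 := sum_split V3 ax.
have s7 := sum_split V3 (@deg G).
have gsum : \sum_(y in L) g y = \sum_(y in L) deg y + \sum_(y in L) ax y + \sum_(y in L) tx y + \sum_(y in L) tx y.
  by rewrite /g !big_split.
have gub : \sum_(y in L) g y <= #|L| * 6.
  by rewrite -sum_nat_const; apply: leq_sum => y; apply: gle.
have cardV : #|[set: V]| = #|V| by rewrite cardsT.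
have [key1 [key2 key3]] := arith h1 h2 h3 h4 h5 e5 e5' s5 h6 e6 s6 s7 gsum gub.
have g6 := sum_eq_max gle key1.
have inL (y : V) : y \in L -> [/\ deg y = 2, ax y = 2 & tx y = 1].
  move=> yL; have := g6 y yL; have := gle y yL; rewrite /g.
  have := ax_le y; rewrite !inE in yL.
  have d2 : deg y <= 2 by have := stepA y; move: yL; case: (deg y) => [|[|[|[|]]]].
  have := tx_le1 d2; move=> q1 q2 q3 q4; split; lia.
have C1 (x : V) : deg x = 2 \/ deg x = 3.
  case xV : (x \in V3); first by right; move: xV; rewrite inE => /eqP.
  left; have xL : x \in L by rewrite inE xV.
  by have [] := inL x xL.
have L2 (x : V) : (x \in L) = (deg x == 2).
  rewrite !inE; case: (C1 x) => ->; by [].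
have sT0 (T : {set V}) : T \in Tri -> sT T = 0.
  move=> TT; move/eqP: key2; rewrite sum_nat_eq0 => /forall_inP /(_ T TT) /eqP; exact.
split => //.
- move=> x d2; have xL : x \in L by rewrite L2 d2.
  have [_ _ t1] := inL x xL.
  have : 0 < tx x by rewrite t1.
  by rewrite /tx => /card_gt0P [T]; rewrite !inE => /andP [tT xT]; exists T.
- have le1 (T : {set V}) : T \in Tri -> #|T :&: L| <= 1.
    rewrite inE => tT; apply/card_le1_eqP => y z; rewrite !inE => /andP [yT yL] /andP [zT zL].
    apply/eqP/negPn/negP => yz.
    have ayz : adj y z by apply: (triP tT).2 => //; rewrite eq_sym.
    have yL' : y \in L by rewrite /L !inE.
    have [dy ay _] := inL y yL'.
    have E : [set x in V3 | adj y x] = nb y.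
      apply/eqP; rewrite eqEcard -degE dy -/(ax y) ay leqnn andbT.
      by apply/subsetP => u; rewrite !inE => /andP [].
    have : z \in nb y by rewrite inE.
    by rewrite -E !inE (negbTE zL).
  have sL : #|Tri| * 1 <= \sum_(T in Tri) #|T :&: L|.
    rewrite DC1 (eq_bigr (fun _ => 1)); first by rewrite sum_nat_const muln1 muln1.
    by move=> y yL; have [] := inL y yL.
  have := sum_eq_max le1 sL.
  move=> H t tT; apply: etrans (H t _); last by rewrite inE.
  by apply: eq_card => x; rewrite /L !inE; case: (C1 x) => ->.
- move=> t1 t2 tt1 tt2 ne; apply/setP => x; rewrite !inE; apply/negP => /andP [x1 x2].
  have := sT0 t1; rewrite inE => /(_ tt1) /eqP; rewrite cards_eq0 => /eqP /setP /(_ t2).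
  rewrite !inE tt2 eq_sym ne /= => /negbT; rewrite negbK => /eqP.
  have [c1 A1] := triP tt1; have [c2 A2] := triP tt2.
  have s1 : t1 :\ x \subset nb x.
    apply/subsetP => z; rewrite !inE => /andP [zx zT]; apply: A1 => //; by rewrite eq_sym.
  have s2 : t2 :\ x \subset nb x.
    apply/subsetP => z; rewrite !inE => /andP [zx zT]; apply: A2 => //; by rewrite eq_sym.
  have := meet_of_card s1 s2; rewrite -degE (cardD1_in c1 x1) (cardD1_in c2 x2).
  move=> /(_ (leq_ltn_trans (stepA x) (isT : 3 < 2 + 2))) /set0Pn [z].
  rewrite !inE => /andP [/andP [zx zt1] /andP [_ zt2]].
  have axz : adj x z by apply: A1 => //; rewrite eq_sym.
  move=> /setP /(_ (mkEdge axz)); rewrite !inE val_mkEdge => /negbT /negP; apply.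
  apply/andP; split; apply/subsetP => u; rewrite !inE => /orP [] /eqP -> //.
Qed.

End OnlyIf.

Unset Implicit Arguments.

Theorem theorem6 (G : sgraph) :
  connected G ->
  (isomorphic (C3 (line_graph G)) G <->
   [/\ (forall x : svert G, deg x = 2 \/ deg x = 3),
       (forall x : svert G, deg x = 2 -> exists t : {set svert G}, is_triangle t /\ x \in t),
       (forall t : {set svert G}, is_triangle t -> #|[set x in t | deg x == 2]| = 1) &
       (forall t1 t2 : {set svert G}, is_triangle t1 -> is_triangle t2 -> t1 != t2 ->
          t1 :&: t2 = set0)]).
Proof.
move=> _; split.
  case=> f [fb fa]; exact: (only_if_conds fb fa).
case=> H1 H2 H3 H4.
exact: (iso_from (FF_bij H1 H2 H3 H4) (FF_adj H1 H2 H3 H4)).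
Qed.
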